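(* Let $n<0<m$ be integers. There is no family $(\Phi_j)_{n\leq j\leq m}$ of orientation preserving homeomorphisms of the circle $S^1$ such that: each $\Phi_j$ with $j<0$ commutes with each $\Phi_{j'}$ with $j'>0$; $\Phi_j$ has a fixed point if and only if $j\neq 0$; and $\Phi_1\circ\cdots\circ\Phi_m=\Phi_0=\Phi_{-1}\circ\Phi_{-2}\circ\cdots\circ\Phi_{n}$. *)

(* Defs.v *)
From Stdlib Require Import Reals Lra ZArith.
Open Scope R_scope.

Definition S1 : Type := {p : R * R | fst p * fst p + snd p * snd p = 1}.

(* Euclidean distance between points of S^1 (topology of S^1 = induced topology). *)
Definition S1dist (p q : S1) : R :=
  sqrt (Rsqr (fst (proj1_sig p) - fst (proj1_sig q))
      + Rsqr (snd (proj1_sig p) - snd (proj1_sig q))).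

Definition S1_continuous (f : S1 -> S1) : Prop :=
  forall p eps, 0 < eps ->
    exists delta, 0 < delta /\
      forall q, S1dist p q < delta -> S1dist (f p) (f q) < eps.

Definition S1_homeomorphism (f : S1 -> S1) : Prop :=
  exists g : S1 -> S1,
    (forall p, g (f p) = p) /\ (forall p, f (g p) = p) /\
    S1_continuous f /\ S1_continuous g.

Lemma expS1_proof (x : R) :
  cos (2 * PI * x) * cos (2 * PI * x) + sin (2 * PI * x) * sin (2 * PI * x) = 1.
Proof.
  pose proof (sin2_cos2 (2 * PI * x)) as H. unfold Rsqr in H. lra.
Qed.

Definition expS1 (x : R) : S1 :=
  exist _ (cos (2 * PI * x), sin (2 * PI * x)) (expS1_proof x).

(* Orientation preserving: f admits an increasing (degree-one) lift to R. *)
Definition S1_orientation_preserving (f : S1 -> S1) : Prop :=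
  exists F : R -> R,
    continuity F /\
    (forall x y, x < y -> F x < F y) /\
    (forall x, F (x + 1) = F x + 1) /\
    (forall x, f (expS1 x) = expS1 (F x)).

Definition has_fixed_point (f : S1 -> S1) : Prop := exists p, f p = p.

(* comp_up Phi k = Phi 1 o Phi 2 o ... o Phi k  (identity for k = 0). *)
Fixpoint comp_up (Phi : Z -> S1 -> S1) (k : nat) : S1 -> S1 :=
  match k with
  | O => fun p => p
  | S k' => fun p => comp_up Phi k' (Phi (Z.of_nat (S k')) p)
  end.

(* comp_down Phi k = Phi (-1) o Phi (-2) o ... o Phi (-k)  (identity for k = 0). *)
Fixpoint comp_down (Phi : Z -> S1 -> S1) (k : nat) : S1 -> S1 :=
  match k with
  | O => fun p => p
  | S k' => fun p => comp_down Phi k' (Phi (- Z.of_nat (S k'))%Z p)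
  end.

(* Main.v *)
Require Import Defs.
From Stdlib Require Import Reals Lra Lia ZArith Rtrigo_facts Ratan Rtopology Classical ClassicalEpsilon.
Open Scope R_scope.

Lemma cont_eps (f : R -> R) : continuity f ->
  forall x eps, 0 < eps -> exists d, 0 < d /\ forall y, Rabs (y - x) < d -> Rabs (f y - f x) < eps.
Proof.
  intros Hc x eps He. destruct (Hc x eps He) as [d [Hd H]].
  exists d; split; [lra|]. intros y Hy.
  destruct (Req_dec y x) as [->|Hne].
  - rewrite Rminus_diag, Rabs_R0; lra.
  - apply (H y). split; [split; [exact I|auto]|exact Hy].
Qed.

Lemma cos_perZ x (z : Z) : cos (x + 2 * IZR z * PI) = cos x.
Proof.
  destruct (Z_le_gt_dec 0 z) as [Hz|Hz].
  - replace z with (Z.of_nat (Z.to_nat z)) by lia. rewrite <- INR_IZR_INZ. apply cos_period.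
  - set (k := Z.to_nat (- z)). assert (IZR z = - INR k) as E.
    { unfold k. rewrite INR_IZR_INZ, Z2Nat.id by lia. rewrite opp_IZR. ring. }
    rewrite E. rewrite <- (cos_period (x + 2 * - INR k * PI) k). f_equal. ring.
Qed.

Lemma sin_perZ x (z : Z) : sin (x + 2 * IZR z * PI) = sin x.
Proof.
  destruct (Z_le_gt_dec 0 z) as [Hz|Hz].
  - replace z with (Z.of_nat (Z.to_nat z)) by lia. rewrite <- INR_IZR_INZ. apply sin_period.
  - set (k := Z.to_nat (- z)). assert (IZR z = - INR k) as E.
    { unfold k. rewrite INR_IZR_INZ, Z2Nat.id by lia. rewrite opp_IZR. ring. }
    rewrite E. rewrite <- (sin_period (x + 2 * - INR k * PI) k). f_equal. ring.
Qed.

Lemma S1_eq (p q : S1) : proj1_sig p = proj1_sig q -> p = q.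
Proof.
  destruct p as [p Hp], q as [q Hq]; simpl; intros ->. f_equal. apply proof_irrelevance.
Qed.

Lemma expS1_shift x (z : Z) : expS1 (x + IZR z) = expS1 x.
Proof.
  apply S1_eq; simpl.
  replace (2 * PI * (x + IZR z)) with (2 * PI * x + 2 * IZR z * PI) by ring.
  rewrite cos_perZ, sin_perZ. reflexivity.
Qed.

Lemma expS1_inj a b : expS1 a = expS1 b -> exists z : Z, a = b + IZR z.
Proof.
  intros H. apply (f_equal (@proj1_sig _ _)) in H. simpl in H.
  injection H as Hc Hs.
  set (u := 2 * PI * a - 2 * PI * b).
  assert (Hsu : sin u = 0).
  { unfold u. rewrite sin_minus, Hc, Hs. ring. }
  assert (Hcu : cos u = 1).
  { unfold u. rewrite cos_minus, Hc, Hs. pose proof (expS1_proof b). lra. }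
  destruct (sin_eq_0_0 u Hsu) as [k Hk].
  destruct (Zeven_odd_dec k) as [He|Ho]; [apply Zeven_ex in He; destruct He as [q Hq]|apply Zodd_ex in Ho; destruct Ho as [q Hq]]; subst k.
  - exists q. assert (PI > 0) by apply PI_RGT_0.
    assert (E : 2 * PI * a = 2 * PI * (b + IZR q)).
    { rewrite mult_IZR in Hk. unfold u in Hk. lra. }
    apply Rmult_eq_reg_l in E; lra.
  - exfalso. rewrite plus_IZR, mult_IZR in Hk.
    assert (u = PI + 2 * IZR q * PI) as E by (rewrite Hk; ring).
    rewrite E, cos_perZ, cos_PI in Hcu. lra.
Qed.

Lemma expS1_surj (p : S1) : exists x, expS1 x = p.
Proof.
  destruct p as [[a b] Hab]; simpl in Hab.
  assert (Ha : -1 <= a <= 1).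
  { split; nra. }
  assert (PI > 0) by apply PI_RGT_0.
  assert (Hs : sqrt (1 - a²) = Rabs b).
  { rewrite <- sqrt_Rsqr_abs. f_equal. unfold Rsqr. lra. }
  destruct (Rle_dec 0 b) as [Hb|Hb].
  - exists (acos a / (2 * PI)). apply S1_eq; simpl.
    replace (2 * PI * (acos a / (2 * PI))) with (acos a) by (field; lra).
    rewrite cos_acos, sin_acos, Hs, Rabs_pos_eq; auto.
  - exists (- acos a / (2 * PI)). apply S1_eq; simpl.
    replace (2 * PI * (- acos a / (2 * PI))) with (- acos a) by (field; lra).
    rewrite cos_neg, sin_neg, cos_acos, sin_acos, Hs, Rabs_left; auto. f_equal. f_equal; lra. lra.
Qed.

Definition isLift (F : R -> R) : Prop :=
  continuity F /\ (forall x y, x < y -> F x < F y) /\ (forall x, F (x + 1) = F x + 1).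

Lemma lift_nat F : isLift F -> forall x (k : nat), F (x + INR k) = F x + INR k.
Proof.
  intros [_ [_ H1]] x k. induction k.
  - simpl. rewrite !Rplus_0_r. reflexivity.
  - rewrite S_INR. replace (x + (INR k + 1)) with ((x + INR k) + 1) by ring.
    rewrite H1, IHk. ring.
Qed.

Lemma liftZ F : isLift F -> forall x (z : Z), F (x + IZR z) = F x + IZR z.
Proof.
  intros HF x z. destruct (Z_le_gt_dec 0 z) as [Hz|Hz].
  - replace z with (Z.of_nat (Z.to_nat z)) by lia. rewrite <- INR_IZR_INZ. apply lift_nat; auto.
  - set (k := Z.to_nat (- z)). assert (IZR z = - INR k) as E.
    { unfold k. rewrite INR_IZR_INZ, Z2Nat.id by lia. rewrite opp_IZR. ring. }
    rewrite E. pose proof (lift_nat F HF (x + - INR k) k) as H.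
    replace (x + - INR k + INR k) with x in H by ring. lra.
Qed.

Lemma lift_le F : isLift F -> forall x y, x <= y -> F x <= F y.
Proof. intros [_ [H _]] x y [Hl| ->]; [left; auto|right; auto]. Qed.

Lemma lift_lt_rev F : isLift F -> forall x y, F x < F y -> x < y.
Proof.
  intros HF x y H. destruct (Rlt_le_dec x y) as [|Hle]; auto.
  apply (lift_le F HF) in Hle. lra.
Qed.

Lemma lift_surj F : isLift F -> forall c, exists x, F x = c.
Proof.
  intros HF c. pose proof HF as [Hc [Hm H1]].
  set (k := Int_part (c - F 0)).
  destruct (base_Int_part (c - F 0)) as [B1 B2]. fold k in B1, B2.
  pose proof (liftZ F HF 0 k) as E. rewrite Rplus_0_l in E.
  assert (E1 : F (IZR k + 1) = F 0 + IZR k + 1) by (rewrite H1, E; ring).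
  destruct (IVT_cor (fun x => F x - c) (IZR k) (IZR k + 1)) as [z [Hz Hz2]].
  - apply continuity_minus; auto. apply continuity_const. intros ? ?; auto.
  - lra.
  - simpl. rewrite E, E1. nra.
  - exists z. simpl in Hz2. lra.
Qed.

Lemma lift_fixed_norm (Phi : S1 -> S1) F :
  isLift F -> (forall x, Phi (expS1 x) = expS1 (F x)) -> has_fixed_point Phi ->
  exists G, isLift G /\ (forall x, Phi (expS1 x) = expS1 (G x)) /\ exists y, G y = y.
Proof.
  intros HF HP [p Hp]. destruct (expS1_surj p) as [y <-].
  rewrite HP in Hp. destruct (expS1_inj _ _ Hp) as [z Hz].
  exists (fun x => F x - IZR z). destruct HF as [Hc [Hm H1]]. split; [split; [|split]|split].
  - apply continuity_minus; auto. apply continuity_const. intros ? ?; auto.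
  - intros a b Hab. specialize (Hm a b Hab). lra.
  - intros a. rewrite H1. ring.
  - intros x. rewrite HP. rewrite <- (expS1_shift (F x - IZR z) z). f_equal. ring.
  - exists y. lra.
Qed.

Definition closedR (S : R -> Prop) : Prop :=
  forall x, ~ S x -> exists d, 0 < d /\ forall y, Rabs (y - x) < d -> ~ S y.
Definition periodic (S : R -> Prop) : Prop := forall x, S x <-> S (x + 1).

Lemma periodic_nat S : periodic S -> forall x (k : nat), S x <-> S (x + INR k).
Proof.
  intros HS x k. induction k.
  - simpl. rewrite Rplus_0_r. tauto.
  - rewrite S_INR. replace (x + (INR k + 1)) with ((x + INR k) + 1) by ring.
    rewrite IHk. apply HS.
Qed.

Lemma periodicZ S : periodic S -> forall x (z : Z), S x <-> S (x + IZR z).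
Proof.
  intros HS x z. destruct (Z_le_gt_dec 0 z) as [Hz|Hz].
  - replace z with (Z.of_nat (Z.to_nat z)) by lia. rewrite <- INR_IZR_INZ. apply periodic_nat; auto.
  - set (k := Z.to_nat (- z)). assert (IZR z = - INR k) as E.
    { unfold k. rewrite INR_IZR_INZ, Z2Nat.id by lia. rewrite opp_IZR. ring. }
    rewrite E. pose proof (periodic_nat S HS (x + - INR k) k) as H.
    replace (x + - INR k + INR k) with x in H by ring. tauto.
Qed.

Lemma max_below S : closedR S -> periodic S -> forall s0 t, S s0 ->
  exists a, S a /\ a <= t /\ forall s, S s -> s <= t -> s <= a.
Proof.
  intros Hc Hp s0 t Hs0.
  set (E := fun s => S s /\ s <= t).
  assert (HE : exists s, E s).
  { set (k := Int_part (t - s0)). destruct (base_Int_part (t - s0)) as [B1 B2].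
    exists (s0 + IZR k). split. apply (periodicZ S Hp); auto. fold k in B1. lra. }
  assert (Hb : bound E) by (exists t; intros s [_ H]; auto).
  destruct (completeness E Hb HE) as [a [Ha1 Ha2]].
  assert (Hat : a <= t) by (apply Ha2; intros s [_ H]; auto).
  assert (HSa : S a).
  { apply NNPP; intros HnS. destruct (Hc a HnS) as [d [Hd Hdd]].
    assert (a <= a - d/2); [|lra].
    apply Ha2. intros s Hs. pose proof (Ha1 s Hs) as Hsa.
    destruct Hs as [Hs _]. destruct (Rle_dec s (a - d/2)) as [|Hn]; auto.
    exfalso. apply (Hdd s); auto. apply Rabs_def1; lra. }
  exists a. split; [auto|split; auto]. intros s Hs Hst. apply Ha1. split; auto.
Qed.

Lemma min_above S : closedR S -> periodic S -> forall s0 t, S s0 ->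
  exists b, S b /\ t <= b /\ forall s, S s -> t <= s -> b <= s.
Proof.
  intros Hc Hp s0 t Hs0.
  set (S' := fun x => S (- x)).
  assert (Hc' : closedR S').
  { intros x Hx. destruct (Hc (-x) Hx) as [d [Hd H]]. exists d. split; auto.
    intros y Hy. apply H. rewrite <- Rabs_Ropp. replace (- (- y - - x)) with (y - x) by ring. auto. }
  assert (Hp' : periodic S').
  { intros x. unfold S'. rewrite (periodicZ S Hp (- x) (-1)).
    replace (- (x + 1)) with (- x + IZR (-1)) by (simpl; ring). tauto. }
  destruct (max_below S' Hc' Hp' (- s0) (- t)) as [a [Ha1 [Ha2 Ha3]]].
  { unfold S'. rewrite Ropp_involutive. auto. }
  exists (- a). split; [auto|split; [lra|]].
  intros s Hs Hts. assert (- s <= a); [|lra]. apply Ha3; [unfold S'; rewrite Ropp_involutive; auto|lra].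
Qed.

Lemma fin_orbit (g : R -> R) (O : R -> Prop) eps : isLift g -> (exists y, g y = y) -> 0 < eps ->
  (forall x, O x -> O (g x)) -> (forall x y, O x -> O y -> x < y -> eps <= y - x) ->
  forall o, O o -> g o = o.
Proof.
  intros Hg [y Hy] He HO Hsep o Ho.
  set (u := fun k : nat => Nat.iter k g o).
  assert (Hu : forall k, O (u k)) by (induction k; simpl; auto).
  destruct (Rtotal_order (g o) o) as [Hlt|[Heq|Hgt]]; auto; exfalso.
  -
    set (y' := y - IZR (up (y - o))).
    destruct (archimed (y - o)) as [A1 A2].
    assert (Hy' : g y' = y') by (unfold y'; unfold Rminus; rewrite <- opp_IZR, (liftZ g Hg), Hy; ring).
    assert (Hyo : y' < o) by (unfold y'; lra).
    assert (Hind : forall k, y' <= u k /\ u (S k) < u k /\ u k <= o - INR k * eps).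
    { induction k.
      - simpl. split; [lra|split; [auto|lra]].
      - destruct IHk as [I1 [I2 I3]]. split; [|split].
        + change (u (S k)) with (g (u k)). rewrite <- Hy'. apply lift_le; auto.
        + change (u (S (S k))) with (g (u (S k))). change (u (S k)) with (g (u k)) at 2.
          apply (proj1 (proj2 Hg)). auto.
        + rewrite S_INR. specialize (Hsep _ _ (Hu (S k)) (Hu k) I2). nra. }
    destruct (archimed ((o - y') / eps)) as [B1 _].
    set (k := Z.to_nat (up ((o - y') / eps))).
    assert (INR k >= (o - y') / eps).
    { unfold k. rewrite INR_IZR_INZ. destruct (Z_le_gt_dec 0 (up ((o - y') / eps))).
      - rewrite Z2Nat.id by lia; lra.
      - assert ((o - y') / eps > 0) by (apply Rdiv_lt_0_compat; lra).
        assert (HZ : IZR 0 < IZR (up ((o - y') / eps))) by (simpl; lra).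
        apply lt_IZR in HZ. lia. }
    destruct (Hind (S k)) as [J1 [_ J3]]. rewrite S_INR in J3.
    assert (INR k * eps >= o - y').
    { apply Rge_le in H. apply Rle_ge. apply (Rmult_le_compat_r eps) in H; [|lra].
      unfold Rdiv in H. rewrite Rmult_assoc, Rinv_l, Rmult_1_r in H; lra. }
    nra.
  - set (y' := y + IZR (up (o - y))).
    destruct (archimed (o - y)) as [A1 A2].
    assert (Hy' : g y' = y') by (unfold y'; rewrite (liftZ g Hg), Hy; ring).
    assert (Hyo : o < y') by (unfold y'; lra).
    assert (Hind : forall k, u k <= y' /\ u k < u (S k) /\ o + INR k * eps <= u k).
    { induction k.
      - simpl. split; [lra|split; [auto|lra]].
      - destruct IHk as [I1 [I2 I3]]. split; [|split].
        + change (u (S k)) with (g (u k)). rewrite <- Hy'. apply lift_le; auto.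
        + change (u (S (S k))) with (g (u (S k))). change (u (S k)) with (g (u k)) at 1.
          apply (proj1 (proj2 Hg)). auto.
        + rewrite S_INR. specialize (Hsep _ _ (Hu k) (Hu (S k)) I2). nra. }
    destruct (archimed ((y' - o) / eps)) as [B1 _].
    set (k := Z.to_nat (up ((y' - o) / eps))).
    assert (INR k >= (y' - o) / eps).
    { unfold k. rewrite INR_IZR_INZ. destruct (Z_le_gt_dec 0 (up ((y' - o) / eps))).
      - rewrite Z2Nat.id by lia; lra.
      - assert ((y' - o) / eps > 0) by (apply Rdiv_lt_0_compat; lra).
        assert (HZ : IZR 0 < IZR (up ((y' - o) / eps))) by (simpl; lra).
        apply lt_IZR in HZ. lia. }
    destruct (Hind (S k)) as [J1 [_ J3]]. rewrite S_INR in J3.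
    assert (INR k * eps >= y' - o).
    { apply Rge_le in H. apply Rle_ge. apply (Rmult_le_compat_r eps) in H; [|lra].
      unfold Rdiv in H. rewrite Rmult_assoc, Rinv_l, Rmult_1_r in H; lra. }
    nra.
Qed.


Lemma close_meet S T : closedR S -> closedR T -> periodic S -> periodic T ->
  (forall eps, 0 < eps -> exists s t, S s /\ T t /\ Rabs (s - t) < eps) -> exists x, S x /\ T x.
Proof.
  intros HSc HTc HSp HTp H.
  assert (H' : forall n : nat, exists st : R * R, S (fst st) /\ T (snd st) /\
     Rabs (fst st - snd st) < / (INR n + 1) /\ 0 <= fst st <= 1).
  { intros n. destruct (H (/ (INR n + 1))) as [s [t [Hs [Ht Hst]]]].
    { apply Rinv_0_lt_compat. pose proof (pos_INR n). lra. }
    set (k := Int_part s). destruct (base_Int_part s) as [B1 B2]. fold k in B1, B2.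
    exists (s + IZR (- k), t + IZR (- k)). simpl. rewrite opp_IZR.
    split; [rewrite <- opp_IZR; apply (periodicZ S HSp); auto|].
    split; [rewrite <- opp_IZR; apply (periodicZ T HTp); auto|].
    split; [replace (s + - IZR k - (t + - IZR k)) with (s - t) by ring; auto|lra]. }
  set (st := fun n => proj1_sig (constructive_indefinite_description _ (H' n))).
  assert (Hst : forall n, S (fst (st n)) /\ T (snd (st n)) /\
     Rabs (fst (st n) - snd (st n)) < / (INR n + 1) /\ 0 <= fst (st n) <= 1).
  { intros n. unfold st. destruct (constructive_indefinite_description _ (H' n)); simpl; auto. }
  destruct (Bolzano_Weierstrass (fun n => fst (st n)) (fun c => 0 <= c <= 1) (compact_P3 0 1))
    as [l Hl].
  { intros n. apply Hst. }
  exists l. split.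
  - apply NNPP; intros HnS. destruct (HSc l HnS) as [d [Hd Hdd]].
    destruct (Hl (disc l (mkposreal d Hd)) 0%nat) as [p [_ Hp]].
    { exists (mkposreal d Hd). intros x Hx; auto. }
    apply (Hdd _ Hp). apply Hst.
  - apply NNPP; intros HnT. destruct (HTc l HnT) as [d [Hd Hdd]].
    assert (Hd2 : 0 < d / 2) by lra.
    destruct (archimed (2 / d)) as [A1 _].
    set (N := Z.to_nat (up (2 / d))).
    assert (HN : 2 / d < INR N + 1).
    { unfold N. rewrite INR_IZR_INZ. destruct (Z_le_gt_dec 0 (up (2 / d))).
      - rewrite Z2Nat.id by lia. lra.
      - assert (2 / d > 0) by (apply Rdiv_lt_0_compat; lra).
        assert (HZ : IZR 0 < IZR (up (2 / d))) by (simpl; lra). apply lt_IZR in HZ. lia. }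
    destruct (Hl (disc l (mkposreal (d/2) Hd2)) N) as [p [Hp1 Hp2]].
    { exists (mkposreal (d/2) Hd2). intros x Hx; auto. }
    destruct (Hst p) as [_ [HT [Hlt _]]].
    apply (Hdd (snd (st p))); auto.
    assert (Hpn : INR N <= INR p) by (apply le_INR; auto).
    assert (HNp : 0 < INR N + 1) by (pose proof (pos_INR N); lra).
    assert (Hi1 : / (INR p + 1) <= / (INR N + 1)) by (apply Rinv_le_contravar; lra).
    assert (Hi2 : / (INR N + 1) < d / 2).
    { apply (Rmult_lt_reg_l (INR N + 1)); auto. rewrite Rinv_r by lra.
      assert (2 / d * (d/2) = 1) by (field; lra).
      apply (Rmult_lt_compat_r (d/2)) in HN; lra. }
    simpl in Hp2. unfold disc in Hp2; simpl in Hp2.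
    replace (snd (st p) - l) with ((fst (st p) - l) - (fst (st p) - snd (st p))) by ring.
    eapply Rle_lt_trans; [apply Rabs_triang_inv2 || apply Rabs_triang|].
    rewrite Rabs_Ropp. lra.
Qed.

Section Key.
Variable I : Z -> Prop.
Variable f : Z -> R -> R.
Hypothesis Hf : forall i, I i -> isLift (f i) /\ exists y, f i y = y.
Variables S T : R -> Prop.
Hypothesis HSc : closedR S.
Hypothesis HTc : closedR T.
Hypothesis HSp : periodic S.
Hypothesis HTp : periodic T.
Hypothesis HSi : forall i, I i -> forall x, S x <-> S (f i x).
Hypothesis HTi : forall i, I i -> forall x, T x <-> T (f i x).
Hypothesis HSn : exists s, S s.
Hypothesis HTn : exists t, T t.
Hypothesis Hdisj : forall x, S x -> T x -> False.

Definition GapT (o : R) : Prop :=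
  exists o' t, o < t < o' /\ S o /\ S o' /\ T t /\ forall s, o < s < o' -> ~ S s.

Lemma GapT_exists : exists o, GapT o.
Proof.
  destruct HSn as [s0 Hs0]. destruct HTn as [t Ht].
  assert (HtS : ~ S t) by (intro; eapply Hdisj; eauto).
  destruct (max_below S HSc HSp s0 t Hs0) as [a [Ha1 [Ha2 Ha3]]].
  destruct (min_above S HSc HSp s0 t Hs0) as [b [Hb1 [Hb2 Hb3]]].
  exists a, b, t. split; [split|].
  - destruct Ha2; auto. subst; contradiction.
  - destruct Hb2; auto. subst; contradiction.
  - split; [auto|split; [auto|split; [auto|]]]. intros s [H1 H2] Hs.
    destruct (Rle_dec s t). { specialize (Ha3 s Hs r). lra. }
    specialize (Hb3 s Hs ltac:(lra)). lra.
Qed.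

Lemma GapT_inv i : I i -> forall o, GapT o -> GapT (f i o).
Proof.
  intros Hi o [o' [t [[H1 H2] [Ho [Ho' [Ht Hg]]]]]].
  destruct (Hf i Hi) as [HF _]. destruct HF as [Hc [Hm H1']].
  exists (f i o'), (f i t). split; [split; auto|].
  split; [apply HSi; auto|split; [apply HSi; auto|split; [apply HTi; auto|]]].
  intros s [Hs1 Hs2] Hs. destruct (lift_surj (f i) (proj1 (Hf i Hi)) s) as [w <-].
  apply (Hg w). split; eapply lift_lt_rev; eauto; apply Hf; auto.
  apply (HSi i Hi). auto.
Qed.


Lemma key_lemma : exists x, forall i, I i -> f i x = x.
Proof.
  destruct (classic (exists eps, 0 < eps /\ forall x y, GapT x -> GapT y -> x < y -> eps <= y - x))
    as [[eps [He Hsep]]|Hn].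
  - destruct GapT_exists as [o Ho]. exists o. intros i Hi.
    destruct (Hf i Hi) as [HL Hfix].
    apply (fin_orbit (f i) GapT eps HL Hfix He (GapT_inv i Hi) Hsep o Ho).
  - exfalso. destruct (close_meet S T HSc HTc HSp HTp) as [x [Hx1 Hx2]].
    + intros eps He. apply NNPP; intros Hne. apply Hn. exists eps. split; auto.
      intros x y Hx Hy Hxy. apply Rnot_lt_le. intros Hlt. apply Hne.
      destruct Hx as [x' [t [[H1 H2] [Hox [Hox' [Ht Hg]]]]]].
      destruct Hy as [y' [t' [_ [Hoy _]]]].
      exists x, t. split; auto. split; auto.
      assert (x' <= y).
      { apply Rnot_lt_le; intros Hl. apply (Hg y); auto. }
      rewrite Rabs_left by lra. lra.
    + eapply Hdisj; eauto.
Qed.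
End Key.

Lemma comp_up_fix Phi p : forall k, (forall i, (1 <= i <= Z.of_nat k)%Z -> Phi i p = p) ->
  comp_up Phi k p = p.
Proof.
  induction k; intros H; simpl; auto.
  rewrite H by lia. apply IHk. intros i Hi. apply H. lia.
Qed.

Lemma comp_down_fix Phi p : forall k, (forall i, (- Z.of_nat k <= i <= -1)%Z -> Phi i p = p) ->
  comp_down Phi k p = p.
Proof.
  induction k; intros H; simpl; auto.
  rewrite H by lia. apply IHk. intros i Hi. apply H. lia.
Qed.

Lemma op_lift (f : S1 -> S1) : S1_orientation_preserving f ->
  exists F, isLift F /\ forall x, f (expS1 x) = expS1 (F x).
Proof.
  intros [F [H1 [H2 [H3 H4]]]]. exists F. split; [split; [|split]|]; auto.
Qed.

Lemma expS1_1 x : expS1 (x + 1) = expS1 x.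
Proof. pose proof (expS1_shift x 1) as H. simpl in H. exact H. Qed.

Definition Kset (f : S1 -> S1) : R -> Prop := fun x => f (expS1 x) = expS1 x.

Lemma Kset_closed f : S1_orientation_preserving f -> closedR (Kset f).
Proof.
  intros Hop. destruct (op_lift f Hop) as [G [HG HGf]].
  intros x Hx. unfold Kset in Hx. rewrite HGf in Hx.
  set (r := G x - x).
  set (kf := Int_part r). destruct (base_Int_part r) as [B1 B2]. fold kf in B1, B2.
  assert (Hr : r <> IZR kf).
  { intros E. apply Hx. unfold r in E. replace (G x) with (x + IZR kf) by lra. apply expS1_shift. }
  set (e := Rmin (r - IZR kf) (IZR kf + 1 - r)).
  assert (He : 0 < e) by (unfold e; apply Rmin_glb_lt; lra).
  destruct (cont_eps G (proj1 HG) x (e/2) ltac:(lra)) as [d1 [Hd1 Hc]].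
  exists (Rmin d1 (e/2)). split; [apply Rmin_glb_lt; lra|].
  intros y Hy Ky. unfold Kset in Ky. rewrite HGf in Ky.
  destruct (expS1_inj _ _ Ky) as [z Hz].
  assert (Hy1 : Rabs (y - x) < d1) by (eapply Rlt_le_trans; [apply Hy|apply Rmin_l]).
  assert (Hy2 : Rabs (y - x) < e/2) by (eapply Rlt_le_trans; [apply Hy|apply Rmin_r]).
  specialize (Hc y Hy1).
  apply Rabs_def2 in Hc. apply Rabs_def2 in Hy2.
  assert (e <= r - IZR kf) by apply Rmin_l.
  assert (e <= IZR kf + 1 - r) by apply Rmin_r.
  assert (IZR kf < IZR z < IZR kf + 1) by (unfold r in *; lra).
  destruct H1 as [L1 L2]. rewrite <- plus_IZR in L2. apply lt_IZR in L1. apply lt_IZR in L2. lia.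
Qed.

Lemma Kset_periodic f : periodic (Kset f).
Proof. intros x. unfold Kset. rewrite expS1_1. tauto. Qed.

Lemma Kset_nonempty f : has_fixed_point f -> exists x, Kset f x.
Proof.
  intros [p Hp]. destruct (expS1_surj p) as [x <-]. exists x. exact Hp.
Qed.

Lemma hom_inj f : S1_homeomorphism f -> forall p q, f p = f q -> p = q.
Proof.
  intros [g [Hg _]] p q E. rewrite <- (Hg p), <- (Hg q), E. auto.
Qed.

Theorem propositionE (n m : Z) (hn : (n < 0)%Z) (hm : (0 < m)%Z) :
  ~ exists Phi : Z -> S1 -> S1,
      (forall j, (n <= j <= m)%Z ->
         S1_homeomorphism (Phi j) /\ S1_orientation_preserving (Phi j)) /\
      (forall j j', (n <= j < 0)%Z -> (0 < j' <= m)%Z ->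
         forall p, Phi j (Phi j' p) = Phi j' (Phi j p)) /\
      (forall j, (n <= j <= m)%Z -> (has_fixed_point (Phi j) <-> j <> 0%Z)) /\
      (forall p, comp_up Phi (Z.to_nat m) p = Phi 0%Z p) /\
      (forall p, Phi 0%Z p = comp_down Phi (Z.to_nat (- n)) p).
Proof.
  intros [Phi [H1 [H2 [H3 [H4 H5]]]]].
  set (I := fun i => (0 < i <= m)%Z).
  assert (Hfun : forall i, exists F, I i -> isLift F /\ (forall x, Phi i (expS1 x) = expS1 (F x))
                                       /\ exists y, F y = y).
  { intros i. destruct (classic (I i)) as [Hi|Hi].
    - destruct (H1 i ltac:(unfold I in Hi; lia)) as [_ Hop].
      destruct (op_lift _ Hop) as [F [HF HFr]].
      destruct (lift_fixed_norm (Phi i) F HF HFr) as [G [HG [HGr HGy]]].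
      { apply H3; unfold I in Hi; lia. }
      exists G. intros _. auto.
    - exists (fun x => x). intros Hi'; contradiction. }
  set (f := fun i => proj1_sig (constructive_indefinite_description _ (Hfun i))).
  assert (Hf : forall i, I i -> isLift (f i) /\ (forall x, Phi i (expS1 x) = expS1 (f i x))
                                       /\ exists y, f i y = y).
  { intros i Hi. unfold f. destruct (constructive_indefinite_description _ (Hfun i)); simpl; auto. }
  assert (Hf' : forall i, I i -> isLift (f i) /\ exists y, f i y = y).
  { intros i Hi. destruct (Hf i Hi) as [A [_ B]]; auto. }
  assert (H0 : ~ has_fixed_point (Phi 0%Z)).
  { intros Hfp. apply (proj1 (H3 0%Z ltac:(lia)) Hfp). reflexivity. }
  assert (NoP : ~ exists x, forall i, I i -> f i x = x).
  { intros [x Hx]. apply H0. exists (expS1 x). rewrite <- H4.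
    apply comp_up_fix. intros i Hi. assert (I i) by (unfold I; lia).
    destruct (Hf i H) as [_ [Hr _]]. rewrite Hr, Hx; auto. }
  assert (Kinv : forall j, (n <= j < 0)%Z -> forall i, I i -> forall x,
            Kset (Phi j) x <-> Kset (Phi j) (f i x)).
  { intros j Hj i Hi x. destruct (Hf i Hi) as [_ [Hr _]]. unfold Kset. rewrite <- Hr.
    rewrite H2 by (unfold I in Hi; lia). split; intros E.
    - rewrite E; auto.
    - apply (hom_inj (Phi i)); auto. apply (H1 i); unfold I in Hi; lia. }
  set (N := Z.to_nat (- n)).
  assert (KP : forall j, (n <= j < 0)%Z -> S1_homeomorphism (Phi j) /\ S1_orientation_preserving (Phi j))
    by (intros j Hj; apply H1; lia).
  set (L := fun (k : nat) x => forall j, (- Z.of_nat k <= j <= -1)%Z -> Kset (Phi j) x).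
  assert (Lc : forall k, (k <= N)%nat -> closedR (L k)).
  { intros k Hk x Hx. unfold L in Hx. apply not_all_ex_not in Hx. destruct Hx as [j Hj].
    apply imply_to_and in Hj. destruct Hj as [Hj1 Hj2].
    assert (Hjr : (n <= j < 0)%Z) by (unfold N in Hk; lia).
    destruct (Kset_closed _ (proj2 (KP j Hjr)) x Hj2) as [d [Hd Hdd]].
    exists d. split; auto. intros y Hy HL. apply (Hdd y Hy). apply HL; auto. }
  assert (Lp : forall k, periodic (L k)).
  { intros k x. unfold L. split; intros H j Hj; specialize (H j Hj);
      [apply (Kset_periodic (Phi j) x)|apply (Kset_periodic (Phi j) x)]; auto. }
  assert (Li : forall k, (k <= N)%nat -> forall i, I i -> forall x, L k x <-> L k (f i x)).
  { intros k Hk i Hi x. unfold L.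
    assert (Hr : forall j, (- Z.of_nat k <= j <= -1)%Z -> (n <= j < 0)%Z) by (intros; unfold N in Hk; lia).
    split; intros H j Hj; specialize (H j Hj).
    - apply (Kinv j (Hr j Hj) i Hi x); auto.
    - apply (Kinv j (Hr j Hj) i Hi x); auto. }
  assert (Lne : forall k, (k <= N)%nat -> exists x, L k x).
  { induction k; intros Hk.
    - exists 0. intros j Hj. simpl in Hj. lia.
    - destruct IHk as [x0 Hx0]; [lia|].
      assert (Hjr : (n <= - Z.of_nat (S k) < 0)%Z) by (unfold N in Hk; lia).
      destruct (classic (exists x, L k x /\ Kset (Phi (- Z.of_nat (S k))%Z) x)) as [[x [Hx1 Hx2]]|Hno].
      + exists x. intros j Hj. destruct (Z.eq_dec j (- Z.of_nat (S k))) as [->|Hne]; auto.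
        apply Hx1. lia.
      + exfalso. apply NoP.
        apply (key_lemma I f Hf' (L k) (Kset (Phi (- Z.of_nat (S k))%Z))).
        * apply Lc; lia.
        * apply Kset_closed. apply KP; auto.
        * apply Lp.
        * apply Kset_periodic.
        * apply Li; lia.
        * intros i Hi. apply Kinv; auto.
        * exists x0; auto.
        * apply Kset_nonempty. apply H3; lia.
        * intros x A B. apply Hno. exists x; auto. }
  destruct (Lne N (le_n N)) as [x Hx].
  apply H0. exists (expS1 x). rewrite H5. apply comp_down_fix.
  intros i Hi. apply Hx. unfold N in Hi. lia.
Qed.
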